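(* Let $\lambda$ be a well-behaved hypergraph width measure, $k$ an integer, $H$ a hypergraph with $\lambda\text{-}tw(H)\le k$, and $W\subseteq V(H)$. Then there exists a set $S\subseteq V(H)$ with $\lambda_H(S)\le k$ such that for every connected component $C$ of $\underline{H}\setminus S$ (viewed as a vertex set) we have $\lambda_H(W\cap C)\le\lambda_H(W)/2$.
   Context: A hypergraph $H$ has finite vertex set $V(H)$ and edge set $E(H)$ of subsets of $V(H)$; $||H||$ is the size of its encoding. The Gaifman graph $\underline{H}$ is the graph on $V(H)$ with two distinct vertices adjacent iff they lie in a common edge; $\underline{H}\setminus S$ is the graph obtained by deleting the vertices of $S$. A tree decomposition of $H$ is a tree $T$ with bags $B_t\subseteq V(H)$ such that nodes containing a given vertex form a connected subtree and every edge of $\underline{H}$ is inside some bag. A width measure $\lambda$ assigns to each hypergraph $H$ a real function $\lambda_H$ on subsets of $V(H)$; $\lambda\text{-}tw(H)$ is the minimum over tree decompositions of $\max_t\lambda_H(B_t)$. $\lambda$ is well-behaved if: (1) $\lambda_H(\{x\})\ge1$; (2) $\lambda_H(S\cup T)\le\lambda_H(S)+\lambda_H(T)$; (3) equality in (2) for disjoint $S,T$ with no edge of $\underline{H}$ between them; (4) $\lambda_F(S)\le\lambda_H(T)$ whenever $V(H)\subseteq V(F)$, $E(H)\subseteq E(F)$ and $S\subseteq T$; (5) $\lambda_H(S)\le k$ is decidable in time $||H||^{O(k)}$. *)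

(* Defs.v *)
From mathcomp Require Import all_boot all_order all_algebra.
Set Implicit Arguments. Unset Strict Implicit. Unset Printing Implicit Defensive.
Import Order.TTheory GRing.Theory Num.Theory.
Local Open Scope ring_scope.

Record hgraph (T : finType) := Hgraph { hv : {set T}; he : {set {set T}} }.

Definition hwf (T : finType) (H : hgraph T) : Prop :=
  forall e, e \in he H -> e \subset hv H.

Definition gaif (T : finType) (H : hgraph T) : rel T :=
  fun u v => [&& u \in hv H, v \in hv H, u != v &
                 [exists e in he H, (u \in e) && (v \in e)]].

Definition gaif_minus (T : finType) (H : hgraph T) (S : {set T}) : rel T :=
  fun u v => [&& gaif H u v, u \in hv H :\: S & v \in hv H :\: S].

Definition is_component (T : finType) (H : hgraph T) (S C : {set T}) : Prop :=
  exists2 x, x \in hv H :\: S &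
    C = [set y in hv H :\: S | connect (gaif_minus H S) x y].

Definition is_tree (n : nat) (te : rel 'I_n) : Prop :=
  [/\ (0 < n)%N, irreflexive te, symmetric te,
      (forall s t : 'I_n, connect te s t) &
      #|[set p : 'I_n * 'I_n | te p.1 p.2]| = (n.-1 * 2)%N].

Definition tree_decomp (T : finType) (H : hgraph T) (n : nat)
    (te : rel 'I_n) (B : 'I_n -> {set T}) : Prop :=
  [/\ is_tree te,
      (forall t, B t \subset hv H),
      (forall v, v \in hv H -> exists t, v \in B t),
      (forall v s t, v \in B s -> v \in B t ->
         connect (fun a b => [&& te a b, v \in B a & v \in B b]) s t) &
      (forall u v, gaif H u v -> exists t, (u \in B t) && (v \in B t))].

Section Width.
Variable R : realFieldType.
Variable T : finType.
Variable lam : hgraph T -> {set T} -> R.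

Definition tw_le (H : hgraph T) (k : R) : Prop :=
  exists n (te : rel 'I_n) (B : 'I_n -> {set T}),
    tree_decomp H te B /\ forall t, lam H (B t) <= k.

(* conditions (1)-(4) of a well-behaved width measure; (5) is algorithmic *)
Definition well_behaved : Prop :=
  [/\ (forall H, hwf H -> forall x, x \in hv H -> 1 <= lam H [set x]),
      (forall H, hwf H -> forall S U : {set T}, S \subset hv H -> U \subset hv H ->
          lam H (S :|: U) <= lam H S + lam H U),
      (forall H, hwf H -> forall S U : {set T}, S \subset hv H -> U \subset hv H ->
          [disjoint S & U] ->
          (forall u v, u \in S -> v \in U -> ~~ gaif H u v) ->
          lam H (S :|: U) = lam H S + lam H U) &
      (forall H F, hwf H -> hwf F -> hv H \subset hv F -> he H \subset he F ->
          forall S U : {set T}, S \subset U -> U \subset hv H ->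
          lam F S <= lam H U)].
End Width.

(* Main.v *)
Require Import Defs.
From mathcomp Require Import all_boot all_order all_algebra.
From mathcomp Require Import zify lra.
Import Order.TTheory GRing.Theory Num.Theory.

Lemma crossing (T : finType) (r : rel T) (P : pred T) a b :
  connect r a b -> P a -> ~~ P b -> exists x y, [/\ r x y, P x & ~~ P y].
Proof.
move=> /connectP [p pth ->]; elim: p a pth => [|c p IH] a /=; first by move=> _ ->.
case/andP=> rac pth Pa nPl; case Pc: (P c).
- exact: IH pth Pc nPl.
- by exists a, c; rewrite Pc.
Qed.

Lemma connect_ind' (T : finType) (r : rel T) (Q : T -> Prop) x y :
  connect r x y -> Q x -> (forall a b, r a b -> Q a -> Q b) -> Q y.
Proof.
move=> /connectP [p pth ->] Qx step.
elim: p x pth Qx => [|c p IH] x //= /andP [rxc pth] Qx.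
exact: IH pth (step _ _ rxc Qx).
Qed.

Lemma last_occ (T : finType) (r : rel T) t u :
  connect r t u -> u != t ->
  exists2 s, r t s & connect (fun a b => [&& r a b, a != t & b != t]) s u.
Proof.
move=> /connectP [p pth ->]; elim/last_ind: p pth => [|p y IH] /=; first by rewrite eqxx.
rewrite rcons_path last_rcons => /andP [pth ry] yt.
case: (eqVneq (last t p) t) => [E|nE].
- by exists y; [rewrite -E | exact: connect0].
- have [s rts cs] := IH pth nE; exists s => //.
  by apply: connect_trans cs (connect1 _); rewrite ry nE yt.
Qed.

Lemma pig (T : finType) (r : rel T) (D : {set T}) (f : T -> T) :
  (forall t, t \in D -> r t (f t) && r (f t) t) ->
  (forall t, t \in D -> f t \in D -> f (f t) != t) ->
  (#|D| * 2 <= #|[set p : T * T | r p.1 p.2]|)%N.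
Proof.
move=> hr hc.
set D1 := [set (t, f t) | t in D]; set D2 := [set (f t, t) | t in D].
have c1 : #|D1| = #|D| by rewrite card_in_imset // => a b _ _ [].
have c2 : #|D2| = #|D| by rewrite card_in_imset // => a b _ _ [].
have dis : D1 :&: D2 = set0.
  apply/setP => p; rewrite !inE; apply/negP => /andP [/imsetP [a aD ->] /imsetP [b bD [e1 e2]]].
  by move: (hc b bD); rewrite -e1 e2 eqxx => /(_ aD).
have sub : D1 :|: D2 \subset [set p : T * T | r p.1 p.2].
  apply/subsetP => p; rewrite !inE => /orP [] /imsetP [a aD ->] /=;
  by case/andP: (hr a aD).
have := subset_leq_card sub; rewrite cardsU dis cards0 c1 c2; lia.
Qed.

Lemma conn_count (T : finType) (r : rel T) (z : T) :
  symmetric r -> (forall a b, connect r a b) ->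
  ((#|T|.-1) * 2 <= #|[set p : T * T | r p.1 p.2]|)%N.
Proof.
move=> sr cr.
pose reach k u := [exists p : k.-tuple T, path r u p && (last u p == z)].
have ex u : exists k, reach k u.
  have /connectP [p pth e] := cr u z; exists (size p); apply/existsP.
  by exists (in_tuple p); rewrite /= pth -e eqxx.
pose d u := ex_minn (ex u).
have dP u : reach (d u) u /\ forall k, reach k u -> (d u <= k)%N.
  by rewrite /d; case: ex_minnP => m hm hmin; split.
have step u : u != z -> exists v, r u v && (d v < d u)%N.
  move=> uz; have [/existsP [[p sz] /andP [pth /eqP lp]] _] := dP u.
  move: sz pth lp; case: p => [|v p'] /= sz pth lp; first by move: uz; rewrite lp eqxx.
  case/andP: pth => ruv pth.
  have sz' : size p' == (d u).-1 by rewrite -(eqP sz).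
  have rv : reach (d u).-1 v by apply/existsP; exists (Tuple sz'); rewrite /= pth lp eqxx.
  exists v; rewrite ruv /=; have := (dP v).2 _ rv; move: sz => /eqP; lia.
pose g u := odflt u [pick v | r u v && (d v < d u)%N].
have gP u : u \in [set~ z] -> r u (g u) && (d (g u) < d u)%N.
  rewrite !inE => uz; rewrite /g; case: pickP => [v //|none].
  by have [v] := step u uz; rewrite none.
rewrite -(cardsC1 z); apply: (@pig _ _ _ g) => t tD.
- by have /andP [h _] := gP t tD; rewrite h sr h.
- move=> gD; have /andP [_ h1] := gP t tD; have /andP [_ h2] := gP _ gD.
  by apply/eqP => e; move: h2; rewrite e; lia.
Qed.

Local Open Scope ring_scope.

Theorem mainTheorem19 (R : realFieldType) (T : finType)
    (lam : hgraph T -> {set T} -> R) (k : int) (H : hgraph T) (W : {set T}) :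
  well_behaved lam -> hwf H -> tw_le lam H (k%:~R) -> W \subset hv H ->
  exists S : {set T},
    [/\ S \subset hv H, lam H S <= k%:~R &
        forall C, is_component H S C -> lam H (W :&: C) <= lam H W / 2].
Proof.
case=> _ hsub hadd hmono hwfH [n [te [B [[tree Bsub cover sub_conn edge_cov] Bk]]]] WV.
case: tree => n0 irr sym conn cardE.
pose comp (S : {set T}) x := [set y in hv H :\: S | connect (gaif_minus H S) x y].
pose big (S : {set T}) x := (x \in hv H :\: S) && (lam H W / 2 < lam H (W :&: comp S x)).
case: (boolP [exists t, [forall x, ~~ big (B t) x]]).
  case/existsP => t /forallP nb; exists (B t); split => //.
  move=> C [x xV ->]; have := nb x; rewrite /big xV /= -leNgt; exact.
rewrite negb_exists => /forallP allb.
have hx : forall t, {x : T | big (B t) x}.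
  move=> t; case: (pickP (big (B t))) => [x hx|none]; first by exists x.
  exfalso; move: (allb t); rewrite negb_forall => /existsP [x]; by rewrite negbK none.
pose xt t := sval (hx t).
have xtP t : big (B t) (xt t) := svalP (hx t).
pose cut (s t : 'I_n) (a b : 'I_n) :=
  te a b && ~~ (((a == s) && (b == t)) || ((a == t) && (b == s))).
pose A s t := [set u | connect (cut s t) s u].
have cut_sym s t : symmetric (cut s t).
  move=> a b; rewrite /cut sym; congr (_ && ~~ _);
  by case: (a == s); case: (b == t); case: (a == t); case: (b == s).
have cutC s t : cut s t =2 cut t s.
  move=> a b; rewrite /cut; congr (_ && ~~ _);
  by case: (a == s); case: (b == t); case: (a == t); case: (b == s).
have cutL s t : te s t -> t \notin A s t.
  move=> est; rewrite inE; apply/negP => cst.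
  have all : forall a b, connect (cut s t) a b.
    move=> a b; apply: (connect_sub _ (conn a b)) => x y exy.
    case ec: (cut s t x y); first exact: connect1.
    move: ec; rewrite /cut exy /= => /negPn /orP [] /andP [/eqP -> /eqP ->] //.
    by rewrite (sym_connect_sym (cut_sym s t)).
  have := @conn_count _ _ s (cut_sym s t) all; rewrite card_ord.
  have sub : [set p : 'I_n * 'I_n | cut s t p.1 p.2] \subset
             [set p : 'I_n * 'I_n | te p.1 p.2] :\ (s, t) :\ (t, s).
    apply/subsetP => [[a b]]; rewrite !inE /cut /= => /andP [-> h].
    rewrite andbT; apply/andP; split; apply/negP => /eqP [e1 e2]; move: h;
      by rewrite e1 e2 !eqxx ?orbT.
  have st : s != t by apply/negP => /eqP e; move: est; rewrite e irr.
  have := subset_leq_card sub.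
  rewrite [#|[set p : 'I_n * 'I_n | te p.1 p.2]|](cardsD1 (s, t)) in cardE.
  rewrite [#|[set p : 'I_n * 'I_n | te p.1 p.2] :\ (s, t)|](cardsD1 (t, s)) in cardE.
  rewrite !inE /= est sym est eq_sym xpair_eqE (negbTE st) /= in cardE.
  move=> h1 h2; have := leq_trans h2 h1; rewrite -cardE.
  by rewrite add1n => /ltnW; rewrite add1n ltnn.
have crossA s t a b : te s t -> te a b -> a \in A s t -> b \notin A s t ->
    (a == s) && (b == t).
  move=> est eab aA bA; case h1: ((a == s) && (b == t)) => //.
  case h2: ((a == t) && (b == s)).
    by case/andP: h2 => /eqP e _; move: aA; rewrite e (negbTE (cutL _ _ est)).
  have cab : cut s t a b by rewrite /cut eab h1 h2.
  by move: bA; rewrite inE (connect_trans _ (connect1 cab)) // -inE.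
have vsep s t v a b : te s t -> v \in B a -> a \in A s t -> v \in B b -> b \notin A s t ->
    (v \in B s) && (v \in B t).
  move=> est va aA vb bA.
  have [x [y [/and3P [exy vx vy] xA yA]]] := @crossing _ _ (fun u => u \in A s t) _ _ (sub_conn v a b va vb) aA bA.
  by case/andP: (crossA s t x y est exy xA yA) => /eqP <- /eqP <-; rewrite vx vy.
pose f t := odflt t [pick s | te t s && [exists u, (u \in A s t) && (xt t \in B u)]].
have fP t : te t (f t) && [exists u, (u \in A (f t) t) && (xt t \in B u)].
  rewrite /f; case: pickP => [s //|none]; exfalso.
  have /andP [/setDP [xV xB] _] := xtP t.
  have [u xu] := cover _ xV.
  have ut : u != t by apply/negP => /eqP e; move: xu; rewrite e (negbTE xB).
  have [s ets cs] := @last_occ _ _ _ _ (conn t u) ut.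
  move: (none s); rewrite ets /= => /negbT/negP; apply; apply/existsP; exists u; rewrite xu andbT inE.
  apply: (connect_sub _ cs) => a b /and3P [eab ha bt]; apply: connect1.
  by rewrite /cut eab (negbTE ha) (negbTE bt) !andbF.
have [t tt] : exists t, f (f t) = t.
  case: (boolP [exists t, f (f t) == t]) => [/existsP [t /eqP] | ne]; first by exists t.
  have := @pig _ te setT f.
  rewrite cardsT card_ord; move=> /(_ _ _) h; exfalso.
  have : (n * 2 <= (n.-1 * 2))%N.
    rewrite -cardE; apply: h => t _.
      by case/andP: (fP t) => h1 _; rewrite h1 sym h1.
    by move=> _; move: ne; rewrite negb_exists => /forallP ->.
  lia.
set s := f t.
have [ets /existsP [u1 /andP [u1A xu1]]] := andP (fP t).
have [_ /existsP [u2 /andP [u2A xu2]]] := andP (fP s).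
rewrite tt in u2A.
have est : te s t by rewrite sym.
set P := A s t.
have u2P : u2 \notin P.
  apply/negP => u2P; move: u2A u2P; rewrite !inE (eq_connect (cutC t s)) => c1 c2.
  have : t \in A s t.
    rewrite inE; apply: connect_trans c2 _.
    by rewrite (sym_connect_sym (cut_sym s t)).
  by rewrite (negbTE (cutL _ _ est)).
have prop1 y a : y \notin B t -> y \in B a -> a \in P -> forall b, y \in B b -> b \in P.
  move=> yt ya aP b yb; apply/negPn/negP => bP.
  by have /andP [_ ] := vsep s t y a b est ya aP yb bP; rewrite (negbTE yt).
have prop2 y a : y \notin B s -> y \in B a -> a \notin P -> forall b, y \in B b -> b \notin P.
  move=> ys ya aP b yb; apply/negP => bP.
  by have /andP [ ] := vsep s t y b a est yb bP ya aP; rewrite (negbTE ys).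
have [/setDP [xtV xtB] bigt] := andP (xtP t).
have [/setDP [xsV xsB] bigs] := andP (xtP s).
have all1 y : y \in comp (B t) (xt t) -> forall b, y \in B b -> b \in P.
  rewrite inE => /andP [_ c]; apply: (@connect_ind' _ _ (fun y => forall b, y \in B b -> b \in P) _ _ c).
    exact: prop1 xtB xu1 u1A.
  move=> a b /and3P [gab _ /setDP [_ bB]] Qa.
  have [c0 /andP [ac bc]] := edge_cov _ _ gab.
  exact: prop1 bB bc (Qa c0 ac).
have all2 y : y \in comp (B s) (xt s) -> forall b, y \in B b -> b \notin P.
  rewrite inE => /andP [_ c]; apply: (@connect_ind' _ _ (fun y => forall b, y \in B b -> b \notin P) _ _ c).
    exact: prop2 xsB xu2 u2P.
  move=> a b /and3P [gab _ /setDP [_ bB]] Qa.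
  have [c0 /andP [ac bc]] := edge_cov _ _ gab.
  exact: prop2 bB bc (Qa c0 ac).
set S1 := W :&: comp (B t) (xt t).
set S2 := W :&: comp (B s) (xt s).
have S1V : S1 \subset hv H by apply: subset_trans (subsetIl _ _) WV.
have S2V : S2 \subset hv H by apply: subset_trans (subsetIl _ _) WV.
have dis : [disjoint S1 & S2].
  apply/pred0P => y /=; apply/negP => /andP [/setIP [yW y1] /setIP [_ y2]].
  have [a ya] := cover _ (subsetP WV _ yW).
  by move: (all1 _ y1 _ ya); rewrite (negbTE (all2 _ y2 _ ya)).
have nadj : forall u v, u \in S1 -> v \in S2 -> ~~ gaif H u v.
  move=> u v /setIP [_ uu1] /setIP [_ vv2]; apply/negP => g.
  have [c /andP [uc vc]] := edge_cov _ _ g.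
  by move: (all1 _ uu1 _ uc); rewrite (negbTE (all2 _ vv2 _ vc)).
have eq := hadd H hwfH S1 S2 S1V S2V dis nadj.
have sU : S1 :|: S2 \subset W by rewrite subUset !subsetIl.
have le := hmono H H hwfH hwfH (subxx _) (subxx _) (S1 :|: S2) W
  sU WV.
exfalso; move: bigt bigs; rewrite -/S1 -/S2 => bigt bigs.
move: le; rewrite eq => le; clear -le bigt bigs.
lra.
Qed.
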